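(* Let $\mathcal C\subseteq V$ be a subspace of dimension $K=|\mathcal C|$ with orthogonal projector $P$. Then: (1) $A_i(P,P)\ge0$ for all $i$; (2) $\sum_iA_i(P,P)=K$; (3) $\sum_iB_i(P,P)=K^2$; (4) if some sector $\mathcal E_0=\mathrm{span}\{I\}$, then $A_0(P,P)=K^2/\dim V$ and $B_0(P,P)=K/\dim V$; (5) for every $i$, $A_i(P,P)\le K\,B_i(P,P)$, with equality if and only if $\mathcal C$ detects every error in $\mathcal E_i$.
   Context: Let $V$ be a finite-dimensional complex Hilbert space and $\mathcal L(V)$ the space of linear operators on $V$, equipped with the Hilbert–Schmidt inner product $\langle X_1,X_2\rangle=\mathrm{Tr}(X_1^\dagger X_2)$. Fix an orthogonal decomposition $\mathcal L(V)=\bigoplus_{i\in I}\mathcal E_i$. For each $i$, let $\Pi_i$ be the orthogonal projector of $\mathcal L(V)$ onto $\mathcal E_i$, fix an orthonormal basis $\mathcal B_i$ of $\mathcal E_i$, and let $\mathrm{Twirl}_i(X)=\sum_{E\in\mathcal B_i}E^\dagger XE$. Define $A_i(X_1,X_2)=\langle X_1,\Pi_i(X_2)\rangle$ and $B_i(X_1,X_2)=\langle X_1,\mathrm{Twirl}_i(X_2)\rangle$. A subspace $\mathcal C\subseteq V$ with orthogonal projector $P$ detects every error in a subspace $\mathcal F\subseteq\mathcal L(V)$ if for every $E\in\mathcal F$ there is a scalar $c_E\in\mathbb C$ with $PEP=c_EP$. *)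

(* Defs.v *)
From HB Require Import structures.
From mathcomp Require Import all_boot all_order all_algebra algC.
Set Implicit Arguments. Unset Strict Implicit. Unset Printing Implicit Defensive.
Import Order.TTheory GRing.Theory Num.Theory.
Local Open Scope ring_scope.

(* V = C^n (complex numbers modelled by algC), L(V) = 'M[algC]_n. *)

Definition adj (n : nat) (X : 'M[algC]_n) : 'M[algC]_n := (map_mx Num.conj X)^T.

Definition hs (n : nat) (X1 X2 : 'M[algC]_n) : algC := \tr (adj X1 *m X2).

(* An orthogonal decomposition L(V) = (+)_{i in I} E_i together with an
   orthonormal basis B_i of each E_i is encoded by a finite index type J,
   a labelling sector : J -> I and matrices e : J -> 'M_n:
   B_i = { e j | sector j = i },  E_i = span B_i. *)
Definition is_decomposition (n : nat) (I J : finType) (sector : J -> I)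
    (e : J -> 'M[algC]_n) : Prop :=
  (forall j k : J, hs (e j) (e k) = (j == k)%:R) /\
  (forall X : 'M[algC]_n, exists c : J -> algC, X = \sum_j c j *: e j).

Definition in_sector (n : nat) (I J : finType) (sector : J -> I)
    (e : J -> 'M[algC]_n) (i : I) (E : 'M[algC]_n) : Prop :=
  exists c : J -> algC, E = \sum_(j | sector j == i) c j *: e j.

Definition Proj (n : nat) (I J : finType) (sector : J -> I)
    (e : J -> 'M[algC]_n) (i : I) (X : 'M[algC]_n) : 'M[algC]_n :=
  \sum_(j | sector j == i) hs (e j) X *: e j.

Definition Twirl (n : nat) (I J : finType) (sector : J -> I)
    (e : J -> 'M[algC]_n) (i : I) (X : 'M[algC]_n) : 'M[algC]_n :=
  \sum_(j | sector j == i) (adj (e j) *m X *m e j).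

Definition Aenum (n : nat) (I J : finType) (sector : J -> I)
    (e : J -> 'M[algC]_n) (i : I) (X1 X2 : 'M[algC]_n) : algC :=
  hs X1 (Proj sector e i X2).

Definition Benum (n : nat) (I J : finType) (sector : J -> I)
    (e : J -> 'M[algC]_n) (i : I) (X1 X2 : 'M[algC]_n) : algC :=
  hs X1 (Twirl sector e i X2).

(* P is an orthogonal projector (onto the code space C = range P) *)
Definition orth_projector (n : nat) (P : 'M[algC]_n) : Prop :=
  P *m P = P /\ adj P = P.

Definition detects (n : nat) (P : 'M[algC]_n) (F : 'M[algC]_n -> Prop) : Prop :=
  forall E, F E -> exists c : algC, P *m E *m P = c *: P.

(* Main.v *)
Require Import Defs.
From HB Require Import structures.
From mathcomp Require Import all_boot all_order all_algebra algC.
From mathcomp Require Import ring.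
Import Order.TTheory GRing.Theory Num.Theory.
Local Open Scope ring_scope.

Section HS.
Variable n : nat.
Implicit Types X Y Z : 'M[algC]_n.

Lemma adjE X i j : adj X i j = (X j i)^*.
Proof. by rewrite /adj !mxE. Qed.

Lemma hsE X Y : hs X Y = \sum_i \sum_j (X i j)^* * Y i j.
Proof.
rewrite /hs /mxtrace.
rewrite (eq_bigr (fun i => \sum_j (X j i)^* * Y j i)); last first.
  by move=> i _; rewrite mxE; apply: eq_bigr => j _; rewrite adjE.
by rewrite exchange_big.
Qed.

Lemma hsDr X Y Z : hs X (Y + Z) = hs X Y + hs X Z.
Proof. by rewrite /hs mulmxDr mxtraceD. Qed.
Lemma hs0r X : hs X 0 = 0.
Proof. by rewrite /hs mulmx0 mxtrace0. Qed.
Lemma hsZr X a Y : hs X (a *: Y) = a * hs X Y.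
Proof. by rewrite /hs -scalemxAr mxtraceZ. Qed.
Lemma hsNr X Y : hs X (- Y) = - hs X Y.
Proof. by rewrite -scaleN1r hsZr mulN1r. Qed.
Lemma hsBr X Y Z : hs X (Y - Z) = hs X Y - hs X Z.
Proof. by rewrite hsDr hsNr. Qed.
Lemma hs_sumr X (I : Type) (r : seq I) (Q : pred I) (F : I -> 'M[algC]_n) :
  hs X (\sum_(i <- r | Q i) F i) = \sum_(i <- r | Q i) hs X (F i).
Proof. exact: (big_morph (hs X) (hsDr X) (hs0r X)). Qed.

Lemma hsC X Y : hs Y X = (hs X Y)^*.
Proof.
rewrite !hsE rmorph_sum; apply: eq_bigr => i _; rewrite rmorph_sum.
by apply: eq_bigr => j _; rewrite rmorphM /= conjCK mulrC.
Qed.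

Lemma hsZl X a Y : hs (a *: X) Y = a^* * hs X Y.
Proof. by rewrite hsC hsZr rmorphM /= -hsC. Qed.
Lemma hsBl X Y Z : hs (X - Y) Z = hs X Z - hs Y Z.
Proof. by rewrite hsC hsBr rmorphB /= -!hsC. Qed.

Lemma hs_ge0 X : 0 <= hs X X.
Proof.
rewrite hsE; apply: sumr_ge0 => i _; apply: sumr_ge0 => j _.
by rewrite mulrC mul_conjC_ge0.
Qed.

Lemma hs_eq0 X : hs X X = 0 -> X = 0.
Proof.
rewrite hsE => H; apply/matrixP => i j; rewrite mxE.
have H1 : forall i, 0 <= \sum_j (X i j)^* * X i j.
  by move=> k; apply: sumr_ge0 => l _; rewrite mulrC mul_conjC_ge0.
have Hi := psumr_eq0P (fun k _ => H1 k) H (i:=i) isT.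
have H2 : forall j, 0 <= (X i j)^* * X i j.
  by move=> l; rewrite mulrC mul_conjC_ge0.
have Hj := psumr_eq0P (fun k _ => H2 k) Hi (i:=j) isT.
by apply/eqP; rewrite -mul_conjC_eq0 mulrC Hj.
Qed.


Lemma hs_key X Y : hs X X != 0 ->
  hs (Y - (hs X Y / hs X X) *: X) (Y - (hs X Y / hs X X) *: X)
  = hs Y Y - (hs X Y)^* * hs X Y / hs X X.
Proof.
move=> nz.
rewrite hsBl !hsBr !hsZl !hsZr (hsC X Y) rmorphM /= fmorphV /=.
rewrite (geC0_conj (hs_ge0 X)).
move: nz; set x := hs X X; set s := hs X Y; set s' := s^*; set y := hs Y Y.
by move=> nz; field.
Qed.

Lemma hs_CS X Y : (hs X Y)^* * hs X Y <= hs X X * hs Y Y.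
Proof.
have [x0|nz] := eqVneq (hs X X) 0.
  by rewrite x0 mul0r (hs_eq0 _ x0) hsC hs0r rmorph0 mulr0.
have xgt0 : 0 < hs X X by rewrite lt_def nz hs_ge0.
have := hs_ge0 (Y - (hs X Y / hs X X) *: X); rewrite hs_key // subr_ge0.
by rewrite mulrC -ler_pdivrMl // mulrC.
Qed.

Lemma hs_CS_eq X Y : (hs X Y)^* * hs X Y = hs X X * hs Y Y ->
  X = 0 \/ Y = (hs X Y / hs X X) *: X.
Proof.
move=> E.
have [x0|nz] := eqVneq (hs X X) 0; first by left; exact: hs_eq0.
right; apply/eqP; rewrite -subr_eq0; apply/eqP; apply: hs_eq0.
rewrite hs_key // E mulrC mulrA mulVf // mul1r subrr //.
Qed.

Lemma adjM X Y : adj (X *m Y) = adj Y *m adj X.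
Proof. by rewrite /adj map_mxM trmx_mul. Qed.

Lemma adj1 : adj (1%:M : 'M[algC]_n) = 1%:M.
Proof. by rewrite /adj map_mx1 trmx1. Qed.

Lemma adjZ a X : adj (a *: X) = a^* *: adj X.
Proof. by rewrite /adj map_mxZ linearZ. Qed.

Lemma RC_id {r} {C : 'M[algC]_(n, r)} {R : 'M[algC]_(r, n)} :
  row_full C -> row_free R -> C *m R *m (C *m R) = C *m R -> R *m C = 1%:M.
Proof.
move=> Cf Rf H0.
have [B BC] := row_fullP Cf.
have H1 : R *m C *m R = R.
  have := congr1 (mulmx B) H0.
  by rewrite !mulmxA BC !mul1mx.
by apply: (row_free_inj Rf); rewrite mul1mx.
Qed.

Lemma trace_idem X : X *m X = X -> \tr X = (\rank X)%:R.
Proof.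
move=> XX.
have defX := mulmx_base X.
have RC := RC_id (col_base_full X) (row_base_free X).
by rewrite -{1}defX mxtrace_mulC RC ?mxtrace1 // defX.
Qed.

End HS.

Lemma sum_delta (J : finType) (c : J -> algC) (j : J) :
  \sum_k c k * (j == k)%:R = c j.
Proof.
rewrite (bigD1 j) //= eqxx mulr1 big1 ?addr0 // => k kj.
by rewrite eq_sym (negPf kj) mulr0.
Qed.

Section Dec.
Variables (n : nat) (I J : finType) (sector : J -> I) (e : J -> 'M[algC]_n).
Hypothesis HD : is_decomposition sector e.

Lemma orthon j k : hs (e j) (e k) = (j == k)%:R.
Proof. by case: HD. Qed.

Lemma expand X : X = \sum_j hs (e j) X *: e j.
Proof.
case: HD => _ /(_ X) [c ->].
apply: eq_bigr => j _; congr (_ *: _).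
rewrite hs_sumr (eq_bigr (fun k => c k * (j == k)%:R)) ?sum_delta //.
by move=> k _; rewrite hsZr orthon.
Qed.

Lemma proj_sector i E : in_sector sector e i E -> Proj sector e i E = E.
Proof.
case=> c ->; rewrite /Proj; apply: eq_bigr => j sj; congr (_ *: _).
rewrite hs_sumr (eq_bigr (fun k => c k * (j == k)%:R)); last first.
  by move=> k _; rewrite hsZr orthon.
rewrite (bigD1 j) //= eqxx mulr1 big1 ?addr0 // => k /andP [_ kj].
by rewrite eq_sym (negPf kj) mulr0.
Qed.

Lemma e_in_sector j : in_sector sector e (sector j) (e j).
Proof.
exists (fun k => (k == j)%:R).
rewrite (bigD1 j) //= eqxx scale1r big1 ?addr0 // => k /andP [_ kj].
by rewrite (negPf kj) scale0r.
Qed.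

Lemma complete (a b c d : 'I_n) :
  \sum_j (e j c d)^* * e j a b = ((a == c) && (b == d))%:R.
Proof.
have := congr1 (fun M : 'M[algC]_n => M a b) (expand (delta_mx c d)).
rewrite /= summxE mxE => ->.
apply: eq_bigr => j _; rewrite mxE; congr (_ * _).
rewrite hsE (bigD1 c) //= (bigD1 d) //= mxE !eqxx mulr1.
rewrite big1 => [|b' b'd]; last by rewrite mxE eqxx (negPf b'd) mulr0.
rewrite big1 => [|a' a'c]; last by rewrite big1 // => b' _; rewrite mxE (negPf a'c) mulr0.
by rewrite !addr0.
Qed.

Lemma twirl_all X : \sum_j (adj (e j) *m X *m e j) = \tr X *: 1%:M.
Proof.
apply/matrixP => a b; rewrite summxE !mxE.
transitivity (\sum_j \sum_d \sum_c (e j c a)^* * X c d * e j d b).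
  apply: eq_bigr => j _; rewrite mxE; apply: eq_bigr => d _.
  rewrite mxE mulr_suml; apply: eq_bigr => c _; by rewrite adjE.
rewrite exchange_big /= (eq_bigr (fun d => \sum_c \sum_j (e j c a)^* * X c d * e j d b)); last first.
  by move=> d _; rewrite exchange_big.
rewrite exchange_big /=.
transitivity (\sum_c \sum_d X c d * ((d == c) && (b == a))%:R).
  apply: eq_bigr => c _; apply: eq_bigr => d _.
  rewrite -complete mulr_sumr; apply: eq_bigr => j _.
  by rewrite mulrCA mulrA.
rewrite /mxtrace mulr_suml; apply: eq_bigr => c _.
rewrite (bigD1 c) //= eqxx big1 ?addr0 => [|d dc]; last by rewrite (negPf dc) mulr0.
by rewrite eq_sym; case: (a == b); rewrite ?mulr1 ?mulr0.
Qed.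

End Dec.

Lemma sum_sec (V : nmodType) (I J : finType) (sector : J -> I) (F : J -> V) :
  \sum_i \sum_(j | sector j == i) F j = \sum_j F j.
Proof. by rewrite [RHS](partition_big sector xpredT). Qed.

Section Proj.
Variables (n : nat) (P : 'M[algC]_n).
Hypothesis HP : orth_projector P.

Lemma PP : P *m P = P. Proof. by case: HP. Qed.
Lemma aP : adj P = P. Proof. by case: HP. Qed.

Lemma hsPP : hs P P = (\rank P)%:R.
Proof. by rewrite /hs aP PP trace_idem // PP. Qed.

Lemma hsP1 : hs P 1%:M = (\rank P)%:R.
Proof. by rewrite /hs aP mulmx1 trace_idem // PP. Qed.

Lemma trPP W : \tr (P *m W *m P) = \tr (P *m W).
Proof. by rewrite mxtrace_mulC mulmxA PP. Qed.

Lemma hsPM Y : hs P (P *m Y *m P) = hs P Y.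
Proof. by rewrite /hs aP !mulmxA PP trPP. Qed.

Lemma hsMM Y : hs (P *m Y *m P) (P *m Y *m P) = hs P (adj Y *m P *m Y).
Proof.
rewrite /hs !adjM aP.
have -> : P *m (adj Y *m P) *m (P *m Y *m P) = P *m (adj Y *m P *m Y) *m P.
  by rewrite !mulmxA -(mulmxA _ P P) PP.
by rewrite trPP !mulmxA.
Qed.

End Proj.

Theorem mainTheorem4 (n : nat) (I J : finType) (sector : J -> I)
    (e : J -> 'M[algC]_n) (P : 'M[algC]_n) :
  is_decomposition sector e ->
  orth_projector P ->
  let K := \rank P in
  [/\ (forall i, 0 <= Aenum sector e i P P),
      \sum_i Aenum sector e i P P = K%:R,
      \sum_i Benum sector e i P P = (K ^ 2)%:R,
      (forall i0 : I,
         (forall E, in_sector sector e i0 E <-> exists c : algC, E = c *: 1%:M) ->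
         Aenum sector e i0 P P = (K ^ 2)%:R / n%:R /\
         Benum sector e i0 P P = K%:R / n%:R)
    & (forall i,
         Aenum sector e i P P <= K%:R * Benum sector e i P P /\
         (Aenum sector e i P P = K%:R * Benum sector e i P P <->
          detects P (in_sector sector e i)))].
Proof.
move=> HD HP K.
have KE : hs P P = K%:R := @hsPP _ _ HP.
have trK : \tr P = K%:R by rewrite trace_idem // (PP _ _ HP).
have AE : forall i, Aenum sector e i P P = \sum_(j | sector j == i)
    (hs P (P *m e j *m P))^* * hs P (P *m e j *m P).
  move=> i; rewrite /Aenum /Proj hs_sumr; apply: eq_bigr => j _.
  by rewrite hsZr !hsPM // (hsC _ P (e j)).
have BE : forall i, Benum sector e i P P = \sum_(j | sector j == i)
    hs (P *m e j *m P) (P *m e j *m P).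
  move=> i; rewrite /Benum /Twirl hs_sumr; apply: eq_bigr => j _.
  by rewrite hsMM.
split.
- move=> i; rewrite AE; apply: sumr_ge0 => j _; rewrite mulrC; exact: mul_conjC_ge0.
- by rewrite /Aenum -hs_sumr /Proj sum_sec -(@expand _ _ _ _ _ HD P).
- rewrite /Benum -hs_sumr /Twirl sum_sec (@twirl_all _ _ _ _ _ HD) hsZr hsP1 // trK.
  by rewrite natrX expr2.
- move=> i0 Hi0.
  have [n0|npos] := posnP n.
    have hs0 : forall X Y : 'M[algC]_n, hs X Y = 0.
      by move=> X Y; rewrite hsE big1 // => i; have := ltn_ord i; rewrite {2}n0.
    by rewrite /Aenum /Benum !hs0 n0 invr0 !mulr0.
  pose o : 'I_n := Ordinal npos.
  have eS : forall j, sector j == i0 -> e j = e j o o *: 1%:M.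
    move=> j /eqP sj.
    have := @e_in_sector _ _ _ sector e j; rewrite sj => /(Hi0 _) [c ec].
    by rewrite ec !mxE eqxx mulr1.
  set s := \sum_(j | sector j == i0) (e j o o)^* * e j o o.
  have projE : forall X, Proj sector e i0 X = (s * \tr X) *: 1%:M.
    move=> X; rewrite /Proj /s mulr_suml scaler_suml; apply: eq_bigr => j sj.
    rewrite {1 2}(eS j sj) hsZl /hs adj1 mul1mx scalerA.
    by rewrite mulrAC.
  have s1 : s * n%:R = 1.
    have H1 : Proj sector e i0 1%:M = 1%:M.
      by apply: (@proj_sector _ _ _ _ _ HD); apply/Hi0; exists 1; rewrite scale1r.
    move: H1; rewrite projE mxtrace1 => /matrixP /(_ o o). by rewrite !mxE eqxx /= mulr1.
  have nz : n%:R != 0 :> algC by rewrite pnatr_eq0 -lt0n.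
  have sE : s = n%:R^-1 by apply: (mulIf nz); rewrite s1 mulVf.
  split.
    rewrite /Aenum projE hsZr (@hsP1 _ _ HP) trK sE natrX expr2.
    by rewrite /K; ring.
  rewrite /Benum.
  have -> : Twirl sector e i0 P = s *: P.
    rewrite /Twirl /s scaler_suml; apply: eq_bigr => j sj.
    rewrite {1 2}(eS j sj) adjZ adj1 -scalemxAl mul1mx -scalemxAr mulmx1 scalerA.
    by rewrite mulrC.
  by rewrite hsZr KE sE mulrC.
- move=> i; rewrite AE BE mulr_sumr -KE.
  split; first by apply: ler_sum => j _; exact: hs_CS.
  split.
    move=> Heq.
    have H0 : \sum_(j | sector j == i) (hs P P * hs (P *m e j *m P) (P *m e j *m P)
        - (hs P (P *m e j *m P))^* * hs P (P *m e j *m P)) = 0.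
      by rewrite sumrB Heq subrr.
    have Hj : forall j, sector j == i -> (hs P (P *m e j *m P))^* * hs P (P *m e j *m P)
        = hs P P * hs (P *m e j *m P) (P *m e j *m P).
      move=> j sj; apply/eqP; rewrite eq_sym -subr_eq0; apply/eqP.
      by apply: (psumr_eq0P _ H0 sj) => k _; rewrite subr_ge0; exact: hs_CS.
    move=> E [c ->].
    have [P0|Pnz] := eqVneq P 0.
      by exists 0; rewrite P0 mulmx0 scale0r.
    exists (\sum_(j | sector j == i) c j * (hs P (P *m e j *m P) / hs P P)).
    rewrite mulmx_sumr mulmx_suml scaler_suml; apply: eq_bigr => j sj.
    rewrite -scalemxAr -scalemxAl -scalerA; congr (_ *: _).
    case: (@hs_CS_eq _ _ _ (Hj j sj)) => [P0|E'] //.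
    by move: Pnz; rewrite P0 eqxx.
  move=> Hdet; apply: eq_bigr => j sj.
  have := @e_in_sector _ _ _ sector e j; rewrite (eqP sj) => /Hdet [c ->].
  rewrite !hsZr hsZl rmorphM /= (geC0_conj (hs_ge0 _ P)).
  ring.
Qed.
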